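(* Let $\mathscr{P}=\{X_t\}_{t\ge1}$ be a stationary ergodic stochastic process over a finite alphabet $\Sigma$, and let $Q$ be its set of causal states (excluding the class of zero-probability sequences). For $q,q'\in Q$ put $\pi_{q,q'}=\sum_{\sigma\in\Sigma:\,q\sigma=q'}\phi_q(\sigma)$. Then for every $q'\in Q$ and every $d\in\mathbb{N}^+$, $$p_d(q')=\sum_{q\in Q}\pi_{q,q'}\,p_{d-1}(q).$$ Furthermore, $\pi_{q,q'}=0$ whenever $q$ is persistent and $q'$ is transient.
   Context: For $x=\sigma_1\cdots\sigma_n\in\Sigma^\star$ (finite sequences, $\lambda$ the empty sequence) write $Pr(x)=Pr(X_1\cdots X_n=\sigma_1\cdots\sigma_n)$, with $Pr(\lambda)=1$. For $x$ with $Pr(x)>0$, $\mu_x$ is the probability measure on $\Sigma^\omega$ (with the $\sigma$-field generated by cylinders $y\Sigma^\omega$) determined by $\mu_x(y\Sigma^\omega)=Pr(xy)/Pr(x)$. Sequences $x,y$ are equivalent ($x\sim y$) iff $Pr(x)=Pr(y)=0$ or $\mu_x=\mu_y$; this equivalence is right-invariant ($x\sim y\Rightarrow xz\sim yz$). The equivalence classes $[x]$ with $Pr(x)>0$ are the causal states; $\mu_{[x]}:=\mu_x$. The symbolic derivative is $\phi_q(\sigma)=\mu_q(\sigma\Sigma^\omega)$. The notation $q\sigma=q'$ means $[x\sigma]=q'$ for all $x\in q$ (well-defined when $\phi_q(\sigma)>0$). For $q\in Q$ and $d\in\mathbb{N}$, $p_d(q)=\sum_{x\in\Sigma^d:\,[x]=q}Pr(x)$.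 A causal state $q$ is persistent if $\liminf_{d\to\infty}p_d(q)>0$ and transient otherwise. *)

(* Defs.v *)
From HB Require Import structures.
From mathcomp Require Import all_boot all_order all_algebra.
From mathcomp Require Import all_classical all_reals all_analysis.

Set Implicit Arguments.
Unset Strict Implicit.
Unset Printing Implicit Defensive.

Import Order.TTheory GRing.Theory Num.Theory.
Local Open Scope classical_set_scope.
Local Open Scope ring_scope.

(** One-sided infinite sequences over Sigma: w 0 = X_1, w 1 = X_2, ...
    (the point s0 only serves to make the type a pointedType) *)
Definition palph (Sigma : finType) (s0 : Sigma) : Type := Sigma.
HB.instance Definition _ (Sigma : finType) (s0 : Sigma) :=
  Finite.on (palph s0).
HB.instance Definition _ (Sigma : finType) (s0 : Sigma) :=
  isPointed.Build (palph s0) s0.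
Definition seqspace (Sigma : finType) (s0 : Sigma) := nat -> palph s0.

Definition cyl (Sigma : finType) (s0 : Sigma) (x : seq Sigma) : set (seqspace s0) :=
  [set w | map w (iota 0 (size x)) = x].

Definition Omega (Sigma : finType) (s0 : Sigma) := g_sigma_algebraType (range (@cyl Sigma s0)).

Definition shift (Sigma : finType) (s0 : Sigma) (w : Omega s0) : Omega s0 :=
  fun n => w n.+1.

Section CausalStates.
Variables (R : realType) (Sigma : finType) (s0 : Sigma).
Variable P : probability (Omega s0) R.

Definition stationary := forall A : set (Omega s0), measurable A ->
  P ((@shift Sigma s0) @^-1` A) = P A.
Definition ergodic := forall A : set (Omega s0), measurable A ->
  (@shift Sigma s0) @^-1` A = A -> P A = 0%E \/ P A = 1%E.

Definition Pr (x : seq Sigma) : R := fine (P (@cyl Sigma s0 x)).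

(** mu_x, described by its values on the cylinders y Sigma^omega *)
Definition mu (x : seq Sigma) : seq Sigma -> R := fun y => Pr (x ++ y) / Pr x.

Definition equiv (x y : seq Sigma) : Prop :=
  (Pr x = 0 /\ Pr y = 0) \/ (0 < Pr x /\ 0 < Pr y /\ mu x = mu y).

Definition cls (x : seq Sigma) : set (seq Sigma) := [set y | equiv x y].

Definition causal : set (set (seq Sigma)) := [set cls x | x in [set x | 0 < Pr x]].

Definition mu_state (q : set (seq Sigma)) : seq Sigma -> R := mu (xget [::] q).
Definition phi (q : set (seq Sigma)) (s : Sigma) : R := mu_state q [:: s].

(** q s = q' : [x s] = q' for all x in q *)
Definition trans (q : set (seq Sigma)) (s : Sigma) (q' : set (seq Sigma)) : Prop :=
  forall x, q x -> cls (rcons x s) = q'.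

Definition pi_tr (q q' : set (seq Sigma)) : R :=
  \sum_(s : Sigma | `[< trans q s q' >]) phi q s.

Definition pd (d : nat) (q : set (seq Sigma)) : R :=
  \sum_(x : d.-tuple Sigma | `[< cls x = q >]) Pr x.

Definition persistent (q : set (seq Sigma)) : Prop :=
  0 < limn_inf (fun d => pd d q).
Definition transient (q : set (seq Sigma)) : Prop := ~ persistent q.
End CausalStates.

(* Main.v *)
Require Import Defs.
From HB Require Import structures.
From mathcomp Require Import all_boot all_order all_algebra.
From mathcomp Require Import all_classical all_reals all_analysis.
Import Order.TTheory GRing.Theory Num.Theory.
Local Open Scope classical_set_scope.
Local Open Scope ring_scope.

Section Aux.
Variables (R : realType) (Sigma : finType) (s0 : Sigma).
Variable P : probability (Omega s0) R.

Lemma cyl_meas (x : seq Sigma) : measurable (@cyl Sigma s0 x : set (Omega s0)).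
Proof. by apply: sub_gen_smallest; exists x. Qed.

Lemma PrE x : (Pr P x)%:E = P (@cyl Sigma s0 x).
Proof. by rewrite /Pr fineK // fin_num_measure //; exact: cyl_meas. Qed.

Lemma Pr_ge0 x : 0 <= Pr P x.
Proof. by rewrite /Pr fine_ge0. Qed.

Lemma Pr_le1 x : Pr P x <= 1.
Proof. by rewrite -lee_fin PrE probability_le1 //; exact: cyl_meas. Qed.

Lemma Pr_nil : Pr P [::] = 1.
Proof.
rewrite /Pr; have -> : @cyl Sigma s0 [::] = setT by apply/seteqP; split => w //.
by rewrite probability_setT.
Qed.

Lemma iotaS0 n : iota 0 n.+1 = rcons (iota 0 n) n.
Proof. by rewrite -addn1 iotaD add0n cats1. Qed.

Lemma cyl_rcons_sub y s : @cyl Sigma s0 (rcons y s) `<=` @cyl Sigma s0 y.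
Proof.
move=> w; rewrite /cyl /= size_rcons iotaS0 map_rcons.
by move/eqP; rewrite eqseq_rcons => /andP[/eqP -> _].
Qed.

Lemma Pr_rcons_le y s : Pr P (rcons y s) <= Pr P y.
Proof.
rewrite -lee_fin !PrE; apply: le_measure; rewrite ?inE; try exact: cyl_meas.
exact: cyl_rcons_sub.
Qed.

Lemma Pr_split y : Pr P y = \sum_(s : Sigma) Pr P (rcons y s).
Proof.
apply/EFin_inj; rewrite PrE -sumEFin.
have -> : @cyl Sigma s0 y = \bigcup_(s in [set: Sigma]) @cyl Sigma s0 (rcons y s).
  apply/seteqP; split => w.
    move=> hw; exists (w (size y)) => //.
    by rewrite /cyl /= size_rcons iotaS0 map_rcons hw.
  by move=> [s _]; apply: cyl_rcons_sub.
rewrite measure_fin_bigcup //; last first.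
- by move=> s _; exact: cyl_meas.
- move=> s t _ _ [w [h1 h2]]; move: h1 h2; rewrite /cyl /= !size_rcons => -> /eqP.
  by rewrite eqseq_rcons => /andP[_ /eqP].
- exact: finite_finset.
have -> : [set: Sigma] = [set` enum Sigma].
  by apply/seteqP; split => s //= _; rewrite mem_enum.
rewrite -fsbig_seq ?enum_uniq // big_enum /=.
by apply: eq_bigr => s _; rewrite PrE.
Qed.

Lemma sum_tuple_rcons n (F : seq Sigma -> R) :
  \sum_(x : n.+1.-tuple Sigma) F x = \sum_(y : n.-tuple Sigma) \sum_(s : Sigma) F (rcons y s).
Proof.
rewrite pair_big /=.
pose h (p : n.-tuple Sigma * Sigma) : n.+1.-tuple Sigma := [tuple of rcons p.1 p.2].
pose g (x : n.+1.-tuple Sigma) : n.-tuple Sigma * Sigma :=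
  ([tuple of belast (thead x) (behead x)], last (thead x) (behead x)).
rewrite (reindex h) /=; last first.
  have key (x : n.+1.-tuple Sigma) : val x = rcons (belast (thead x) (behead x)) (last (thead x) (behead x)).
    by rewrite -lastI {1}(tuple_eta x).
  exists g => [[y s] _|x _].
    have e := key (h (y, s)); rewrite /= in e.
    have [e1 e2] : belast (thead (h (y, s))) (behead (h (y, s))) = y /\
                   last (thead (h (y, s))) (behead (h (y, s))) = s.
      by move: e => /esym/rcons_inj [-> ->].
    by rewrite /g e2; congr pair; apply/val_inj; rewrite /= e1.
  by apply/val_inj; rewrite /= -key.
by [].
Qed.

Notation Pr := (@Defs.Pr R Sigma s0 P).
Notation eqv := (@Defs.equiv R Sigma s0 P).
Notation cls := (@Defs.cls R Sigma s0 P).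

Lemma Pr_cases x : Pr x = 0 \/ 0 < Pr x.
Proof. by have := Pr_ge0 x; rewrite le0r => /orP[/eqP|]; [left|right]. Qed.

Lemma equiv_refl x : eqv x x.
Proof. by case: (Pr_cases x) => h; [left|right]. Qed.

Lemma equiv_sym {x y} : eqv x y -> eqv y x.
Proof. by case=> [[? ?]|[? [? ?]]]; [left|right]. Qed.

Lemma equiv_trans {x y z} : eqv x y -> eqv y z -> eqv x z.
Proof.
case=> [[hx hy]|[hx [hy e1]]] [[hy' hz]|[hy' [hz e2]]].
- by left.
- by move: hy'; rewrite hy ltxx.
- by move: hy; rewrite hy' ltxx.
- by right; split => //; split => //; rewrite e1.
Qed.

Lemma cls_eq x y : eqv x y -> cls x = cls y.
Proof.
move=> e; apply/seteqP; split => z; rewrite /Defs.cls /= => h.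
  exact: (equiv_trans (equiv_sym e) h).
exact: (equiv_trans e h).
Qed.

Lemma in_cls x : cls x x.
Proof. exact: equiv_refl. Qed.

Lemma mu_s y s : mu P y [:: s] = Pr (rcons y s) / Pr y.
Proof. by rewrite /mu cats1. Qed.

Lemma mu_rcons_eq y s w : 0 < Pr y -> 0 < Pr (rcons y s) ->
  mu P (rcons y s) w = mu P y (s :: w) / mu P y [:: s].
Proof.
move=> hy hys; rewrite mu_s /mu cat_rcons.
have hy0 : Pr y != 0 by rewrite gt_eqF.
have hys0 : Pr (rcons y s) != 0 by rewrite gt_eqF.
by rewrite invf_div mulrA divfK.
Qed.

Lemma equiv_rcons y z s : eqv y z -> eqv (rcons y s) (rcons z s).
Proof.
case=> [[hy hz]|[hy [hz e]]].
  left; split; apply/eqP; rewrite eq_le Pr_ge0 andbT.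
    by rewrite -hy Pr_rcons_le.
  by rewrite -hz Pr_rcons_le.
have es : Pr (rcons y s) / Pr y = Pr (rcons z s) / Pr z by rewrite -!mu_s e.
case: (Pr_cases (rcons y s)) => hys.
  left; split => //; move: es; rewrite hys mul0r => /esym/eqP.
  by rewrite mulf_eq0 invr_eq0 (gt_eqF hz) orbF => /eqP.
case: (Pr_cases (rcons z s)) => hzs.
  by move: es; rewrite hzs mul0r => /eqP; rewrite mulf_eq0 invr_eq0 !gt_eqF.
right; split => //; split => //.
by apply/funext => w; rewrite !mu_rcons_eq // e.
Qed.

Lemma phi_cls y s : 0 < Pr y -> phi P (cls y) s = Pr (rcons y s) / Pr y.
Proof.
move=> hy; rewrite /phi /mu_state.
have : cls y (xget [::] (cls y)) by apply: xgetI (in_cls y).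
case=> [[hy0 _]|[_ [_ <-]]]; first by move: hy; rewrite hy0 ltxx.
exact: mu_s.
Qed.

Lemma trans_cls y s q' : trans P (cls y) s q' <-> cls (rcons y s) = q'.
Proof.
split; first by apply; exact: in_cls.
move=> h x hx; rewrite -h; apply: cls_eq; apply: equiv_rcons.
exact: equiv_sym.
Qed.

Lemma decomp n q' : pd P n.+1 q' = \sum_(y : n.-tuple Sigma) pi_tr P (cls y) q' * Pr y.
Proof.
rewrite /pd big_mkcond /=.
rewrite (sum_tuple_rcons n (fun x => if `[< cls x = q' >] then Pr x else 0)).
apply: eq_bigr => y _.
case: (Pr_cases y) => hy.
  rewrite hy mulr0 big1 // => s _; case: ifP => // _.
  by apply/eqP; rewrite eq_le Pr_ge0 andbT -hy Pr_rcons_le.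
rewrite /pi_tr mulr_suml [RHS]big_mkcond /=; apply: eq_bigr => s _.
rewrite (asbool_equiv_eq (trans_cls y s q')).
by case: ifP => // _; rewrite phi_cls // divfK // gt_eqF.
Qed.

Lemma phi_ge0 q s : 0 <= phi P q s.
Proof. by rewrite /phi /mu_state /mu divr_ge0 // Pr_ge0. Qed.

Lemma pi_ge0 q q' : 0 <= pi_tr P q q'.
Proof. by rewrite /pi_tr sumr_ge0 // => s _; exact: phi_ge0. Qed.

Lemma pd_ge0 n q : 0 <= pd P n q.
Proof. by rewrite /pd sumr_ge0 // => s _; exact: Pr_ge0. Qed.

Lemma part1 q' n :
  ((pd P n.+1 q')%:E = \esum_(q in causal P) (pi_tr P q q' * pd P n q)%:E)%E.
Proof.
rewrite decomp -sumEFin.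
transitivity (\esum_(q in causal P) \sum_(y : n.-tuple Sigma)
   ((if `[< cls y = q >] then pi_tr P q q' * Pr y else 0)%:E))%E; last first.
  apply: eq_esum => q _; rewrite sumEFin /pd mulr_sumr [in RHS]big_mkcond /=.
  by congr EFin; apply: eq_bigr => y _; case: ifP => //; rewrite mulr0.
rewrite esum_sum; last first.
  by move=> q y _ _; case: ifP => // _; rewrite lee_fin mulr_ge0 ?pi_ge0 ?Pr_ge0.
apply: eq_bigr => y _.
case: (Pr_cases y) => hy.
  rewrite esum1; first by rewrite hy mulr0.
  by move=> q _; case: ifP => // _; rewrite hy mulr0.
rewrite esum_mkcond.
transitivity (\esum_(q in [set: set (seq Sigma)])
   (if q \in [set cls y] then
     ((if `[< cls y = q >] then pi_tr P q q' * Pr y else 0)%:E)%E else 0%E)); last first.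
  apply: eq_esum => q _.
  case: (asboolP (cls y = q)) => e.
    rewrite !ifT //; rewrite inE //=; rewrite -e; exists y => //.
  by do 2! case: ifP.
rewrite -esum_mkcond esum_set1; first by rewrite asboolT.
by rewrite asboolT // lee_fin mulr_ge0 ?pi_ge0 ?Pr_ge0.
Qed.

Lemma sum_all n : \sum_(x : n.-tuple Sigma) Pr x = 1.
Proof.
elim: n => [|n IH].
  rewrite (big_pred1 [tuple]) ?Pr_nil // => x.
  by rewrite [x]tuple0 /= eqxx.
rewrite (sum_tuple_rcons n Pr) -{}IH; apply: eq_bigr => y _.
by rewrite Pr_split.
Qed.

Lemma pd_le1 n q : pd P n q <= 1.
Proof.
rewrite -(sum_all n) /pd [leRHS](bigID (fun x : n.-tuple Sigma => `[< cls x = q >])) /=.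
by rewrite lerDl sumr_ge0 // => x _; exact: Pr_ge0.
Qed.

Lemma pd_step q q' n : pi_tr P q q' * pd P n q <= pd P n.+1 q'.
Proof.
rewrite decomp /pd mulr_sumr big_mkcond /=; apply: ler_sum => y _.
case: asboolP => [<-|_]; last by rewrite mulr_ge0 ?pi_ge0 ?Pr_ge0.
by [].
Qed.

Lemma liminf_sup (u : nat -> R) : (forall n, 0 <= u n <= 1) ->
  limn_inf u = sup (range (infs u)).
Proof.
move=> hu; apply: cvg_lim => //; apply: cvg_infs_sup.
  by exists 1 => _ [n _ <-]; case/andP: (hu n).
by exists 0 => _ [n _ <-]; case/andP: (hu n).
Qed.

Lemma part2 q q' : persistent P q -> transient P q' -> pi_tr P q q' = 0.
Proof.
move=> hp ht; apply/eqP; rewrite eq_le pi_ge0 andbT leNgt; apply/negP => hc.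
apply: ht; move: hp; rewrite /persistent.
set u := fun d => pd P d q; set v := fun d => pd P d q'.
have bu n : 0 <= u n <= 1 by rewrite pd_ge0 pd_le1.
have bv n : 0 <= v n <= 1 by rewrite pd_ge0 pd_le1.
rewrite !liminf_sup // => /(sup_gt _) [].
  by exists (infs u 0); exists 0%N.
move=> _ [N _ <-] hm.
have lbs (w : nat -> R) k : (forall n, 0 <= w n <= 1) -> has_lbound (sdrop w k).
  by move=> bw; exists 0 => _ [j _ <-]; case/andP: (bw j).
have uk k : (N <= k)%N -> infs u N <= u k.
  by move=> hk; apply: ge_inf; [exact: lbs|exists k].
have : pi_tr P q q' * infs u N <= infs v N.+1.
  apply: lb_le_inf; first by exists (v N.+1); exists N.+1 => /=.
  move=> _ [k hk <-]; case: k hk => // k hk.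
  apply: le_trans (pd_step q q' k).
  by rewrite ler_wpM2l ?pi_ge0 // uk.
move=> h; apply: lt_le_trans (mulr_gt0 hc hm) _; apply: le_trans h _.
apply: ub_le_sup; last by exists N.+1.
exists 1 => _ [n _ <-]; apply: le_trans (_ : v n <= 1); last by case/andP: (bv n).
by apply: ge_inf; [exact: lbs|exists n => /=].
Qed.
End Aux.

Theorem mainTheorem2 (R : realType) (Sigma : finType) (s0 : Sigma)
  (P : probability (Omega s0) R) :
  stationary P -> ergodic P ->
  (forall q' : set (seq Sigma), causal P q' -> forall d : nat, (0 < d)%N ->
     ((pd P d q')%:E = \esum_(q in causal P) (pi_tr P q q' * pd P d.-1 q)%:E)%E) /\
  (forall q q' : set (seq Sigma), causal P q -> causal P q' ->
     persistent P q -> transient P q' -> pi_tr P q q' = 0).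
Proof.
move=> _ _; split.
  by move=> q' _ [//|n] _; exact: part1.
by move=> q q' _ _; exact: part2.
Qed.
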